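(* Let $f$, $\mathcal{X}$, $D_0$, $f^*$, $\epsilon$, $R_\epsilon$, $M$ and DFDS be as in the context. Let $x^*\in\mathcal{X}$ be a global minimizer of $f$ over $\mathcal{X}$ and let $x_k\in\mathcal{X}_{R_\epsilon}$ with $x_k\notin\mathcal{X}^*_{R_\epsilon}$ (so that $\|x^*-x_k\|>R_\epsilon$). Define $\alpha=\arcsin\frac{\sqrt{3}R_\epsilon}{2\|x^*-x_k\|}$ and $\mathcal{S}^{N-1}_\alpha=\{d\in\mathcal{S}^{N-1}: \angle(x^*-x_k,d)\le\alpha\}$, where $\angle(u,v)\in[0,\pi]$ denotes the angle between vectors $u,v$. Then: 1. $\frac{\sqrt{3}R_\epsilon}{2(D_0+R_\epsilon)}\le\sin\alpha<\frac{\sqrt{3}}{2}$, equivalently $\arcsin\!\big(\frac{\sqrt{3}R_\epsilon}{2(D_0+R_\epsilon)}\big)\le\alpha<\frac{\pi}{3}$. 2. For every $d\in\mathcal{S}^{N-1}_\alpha$, the ray $\{x_k+td: t\ge 0\}$ intersects $\overline{\mathcal{B}}(x^*,R_\epsilon)$ in a segment (chord) of length at least $R_\epsilon$. 3. If $x_k$ is the current iteration point of DFDS and some direction $d_m$ generated at $x_k$ lies in $\mathcal{S}^{N-1}_\alpha$, then the directional search at $x_k$ finds, with certainty, a point $y$ with $f(y)\le f(x_k)-\epsilon/3$.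
   Context: $f$ is continuous and real-valued; $\mathcal{X}\subset\mathbb{R}^N$ is compact and convex with diameter $D_0$; $f^*=\min_{x\in\mathcal{X}}f(x)$. For $R>0$, $\mathcal{X}_R=\{x\in\mathbb{R}^N:\min_{s\in\mathcal{X}}\|x-s\|\le R\}$; $\overline{\mathcal{B}}(x,R)$ is the closed Euclidean ball; $\mathcal{S}^{N-1}$ is the unit sphere. Standing assumption: for the given $\epsilon>0$, $R_\epsilon>0$ is such that $f$ is well-defined on $\mathcal{X}_{R_\epsilon}$ and for every $x\in\mathcal{X}_{R_\epsilon}$ with $f(x)\le f^*+\epsilon$ one has $f(y)\le f(x)+\epsilon/3$ for all $y\in\overline{\mathcal{B}}(x,R_\epsilon)\cap\mathcal{X}_{R_\epsilon}$. $\mathcal{X}^*_{R_\epsilon}=\{x\in\mathcal{X}_{R_\epsilon}: f(x)\le f^*+\frac{2\epsilon}{3}\}$. DFDS (inputs $R_\epsilon$, integer $M\ge1$, $\epsilon$): Step 0: choose $x_0\in\mathcal{X}$, set $k=0$, $m=0$. Step 1: if $m\ge M$ go to Step 3; otherwise draw $d_m$ uniformly on $\mathcal{S}^{N-1}$ and set $r=R_\epsilon$. Step 2: if $x_k+rd_m\notin\mathcal{X}_{R_\epsilon}$, set $m=m+1$ and go to Step 1; else if $f(x_k+rd_m)\le f(x_k)-\epsilon/3$, set $x_{k+1}=x_k+rd_m$, $k=k+1$, $m=0$ and go to Step 1; otherwise set $r=r+R_\epsilon$ and repeat Step 2. Step 3: output any point of $\mathcal{X}\cap\overline{\mathcal{B}}(x_k,R_\epsilon)$.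 The points $x_k$ are the iteration points; the ''directional search at $x_k$'' is the line search of Step 2 along directions drawn while the current iteration point is $x_k$. *)

(* Defs.v *)
From HB Require Import structures.
From mathcomp Require Import all_boot all_order all_algebra.
From mathcomp Require Import all_classical all_reals all_analysis.
Set Implicit Arguments. Unset Strict Implicit. Unset Printing Implicit Defensive.
Import Order.TTheory GRing.Theory Num.Theory numFieldNormedType.Exports.
Local Open Scope ring_scope.
Local Open Scope classical_set_scope.

Section Defs.
Variables (R : realType) (N : nat).
Local Notation V := 'rV[R]_N.

Definition dotv (u v : V) : R := \sum_(i < N) u ord0 i * v ord0 i.
Definition enorm (u : V) : R := Num.sqrt (dotv u u).

Definition vangle (u v : V) : R := acos (dotv u v / (enorm u * enorm v)).

Definition convex_seg (X : set V) : Prop :=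
  forall x y t, X x -> X y -> 0 <= t <= 1 -> X ((1 - t) *: x + t *: y).

Definition is_diameter (X : set V) (D0 : R) : Prop :=
  (forall x y, X x -> X y -> enorm (x - y) <= D0) /\
  (forall e, 0 < e -> exists x y, [/\ X x, X y & D0 - e < enorm (x - y)]).

Definition XR (X : set V) (Rr : R) : set V :=
  [set x | exists s, X s /\ enorm (x - s) <= Rr].

Definition cball (c : V) (Rr : R) : set V := [set y | enorm (y - c) <= Rr].

Definition standing_assumption (f : V -> R) (X : set V) (fstar eps Reps : R) :=
  forall x, XR X Reps x -> f x <= fstar + eps ->
    forall y, cball x Reps y -> XR X Reps y -> f y <= f x + eps / 3.

Definition Xstar (f : V -> R) (X : set V) (fstar eps Reps : R) : set V :=
  [set x | XR X Reps x /\ f x <= fstar + 2 * eps / 3].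

(* Step 2 of DFDS at the iteration point xk along direction d: the trial
   points are xk + (j*Reps) d, j = 1, 2, ...; the search along d succeeds at
   y when y is the first trial point that is not rejected, and it satisfies
   the decrease test (all earlier trial points stay in X_R and fail the test). *)
Definition dir_search_finds (f : V -> R) (X : set V) (eps Reps : R)
    (xk d y : V) : Prop :=
  exists j : nat, [/\ (0 < j)%N,
    y = xk + (j%:R * Reps) *: d,
    XR X Reps y, f y <= f xk - eps / 3 &
    forall i : nat, (0 < i < j)%N ->
      XR X Reps (xk + (i%:R * Reps) *: d) /\
      f xk - eps / 3 < f (xk + (i%:R * Reps) *: d)].

End Defs.

(* Main.v *)
Require Import Defs.
From HB Require Import structures.
From mathcomp Require Import all_boot all_order all_algebra.
From mathcomp Require Import all_classical all_reals all_analysis.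
From mathcomp Require Import ring lra.
Import Order.TTheory GRing.Theory Num.Theory numFieldNormedType.Exports.
Local Open Scope ring_scope.

Section Trig.
Variable R : realType.

Lemma cos_pi3 : cos (pi / 3) = 1 / 2 :> R.
Proof.
set a : R := pi / 3.
have pi0 : (0 : R) < pi := pi_gt0 R.
have e : a + a *+ 2 = pi by rewrite /a; field.
have h : cos (a + a *+ 2) = -1 by rewrite e cospi.
rewrite cosD cos_mulr2n sin_mulr2n in h.
have s2 := sin2cos2 a.
have c0 : 0 < cos a.
  apply: cos_gt0_pihalf; rewrite /a; apply/andP; split; lra.
set c := cos a in h s2 c0 *.
have : (c + 1) * (2 * c - 1) ^+ 2 = 0.
  rewrite -mulr_natr in h.
  have -> : (c + 1) * (2 * c - 1) ^+ 2 = 4 * c ^+ 3 - 3 * c + 1 by ring.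
  have -> : c ^+ 3 = c * c ^+2 by ring.
  rewrite -[c ^+ 2](subrK (sin a ^+ 2)).
  rewrite -mulr_natr in h.
  move: h; rewrite s2; move=> h; nra.
move/eqP; rewrite mulf_eq0 expf_eq0 /= => /orP[]; first by lra.
move=> /eqP; lra.
Qed.


Lemma sqrt3 : Num.sqrt 3 ^+ 2 = 3 :> R.
Proof. by rewrite sqr_sqrtr. Qed.

Lemma sqrt3_ge0 : 0 <= Num.sqrt 3 :> R.
Proof. exact: sqrtr_ge0. Qed.

Lemma sqrt3_lt2 : Num.sqrt 3 < 2 :> R.
Proof. have := sqrt3; have := sqrt3_ge0; nra. Qed.

Lemma asin_itv (x : R) : -1 <= x <= 1 -> asin x \in `[(- (pi/2)), pi/2].
Proof. by move=> h; rewrite in_itv /= asin_geNpi2 // asin_lepi2. Qed.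

Lemma asin_le (x y : R) : -1 <= x -> x <= y -> y <= 1 -> asin x <= asin y.
Proof.
move=> hx xy hy.
have hx' : -1 <= x <= 1 by apply/andP; split; lra.
have hy' : -1 <= y <= 1 by apply/andP; split; lra.
rewrite leNgt; apply/negP => h.
have := h; rewrite -(ltr_sin (@asin_itv y hy') (@asin_itv x hx')).
have mx : x \in `[-1, 1] by rewrite in_itv.
have my : y \in `[-1, 1] by rewrite in_itv.
rewrite (asinK mx) (asinK my); lra.
Qed.

Lemma asin_ge0 (x : R) : 0 <= x <= 1 -> 0 <= asin x.
Proof.
move=> /andP[x0 x1].
have pi0 : (0 : R) < pi := pi_gt0 R.
have e : asin 0 = 0 :> R.
  by rewrite -{1}sin0 sinK // in_itv /=; apply/andP; split; lra.
rewrite -[X in X <= _]e.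
have m1 : (-1:R) <= 0 by lra.
exact: asin_le m1 x0 x1.
Qed.

Lemma asin_lt_pi3 (s : R) : 0 <= s -> s < Num.sqrt 3 / 2 -> asin s < pi / 3.
Proof.
move=> s0 s3.
have pi0 : (0 : R) < pi := pi_gt0 R.
have s1 : -1 <= s <= 1 by move: sqrt3_lt2 => ?; apply/andP; split; lra.
have a0 : 0 <= asin s by apply: asin_ge0; case/andP: s1 => _ ->; rewrite s0.
have a1 := asin_lepi2 s1.
have hq : 1/2 < Num.sqrt (1 - s ^+ 2).
  have q0 := sqrtr_ge0 (1 - s ^+ 2).
  have ss : s ^+ 2 < 3/4.
    have := sqrt3; have := sqrt3_ge0; nra.
  have := sqr_sqrtr (ltac:(lra) : 0 <= 1 - s ^+ 2); nra.
rewrite -cos_asin // -cos_pi3 in hq.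
have m1 : asin s \in `[0, pi] by rewrite in_itv /=; apply/andP; split; lra.
have m2 : (pi / 3 : R) \in `[0, pi] by rewrite in_itv /=; apply/andP; split; lra.
by rewrite (ltr_cos m1 m2) in hq.
Qed.

Lemma cos_le_of_acos (x al : R) : -1 <= x <= 1 -> 0 <= al <= pi / 2 ->
  acos x <= al -> cos al <= x.
Proof.
move=> hx /andP[a0 a1] h.
have pi0 : (0 : R) < pi := pi_gt0 R.
rewrite leNgt; apply/negP => h2.
have hx' : x \in `[-1, 1] by rewrite in_itv.
have m1 : acos x \in `[0, pi] by rewrite in_itv /= acos_ge0 // acos_lepi.
have m2 : al \in `[0, pi] by rewrite in_itv /=; apply/andP; split; lra.
move: h2; rewrite -{1}(acosK hx') (ltr_cos m2 m1); lra.
Qed.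

End Trig.
Section Vec.
Variables (R : realType) (N : nat).
Local Notation V := 'rV[R]_N.
Implicit Types (u v w : V) (k : R).

Lemma dotvC u v : dotv u v = dotv v u.
Proof. by apply: eq_bigr => i _; rewrite mulrC. Qed.

Lemma dotvDl u w v : dotv (u + w) v = dotv u v + dotv w v.
Proof. by rewrite /dotv -big_split; apply: eq_bigr => i _; rewrite mxE mulrDl. Qed.

Lemma dotvZl k u v : dotv (k *: u) v = k * dotv u v.
Proof. by rewrite /dotv mulr_sumr; apply: eq_bigr => i _; rewrite mxE mulrA. Qed.

Lemma dotvNl u v : dotv (- u) v = - dotv u v.
Proof. by rewrite -scaleN1r dotvZl mulN1r. Qed.

Lemma dotvDr u v w : dotv u (v + w) = dotv u v + dotv u w.
Proof. by rewrite dotvC dotvDl !(dotvC u). Qed.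

Lemma dotvZr k u v : dotv u (k *: v) = k * dotv u v.
Proof. by rewrite dotvC dotvZl dotvC. Qed.

Lemma dotvNr u v : dotv u (- v) = - dotv u v.
Proof. by rewrite dotvC dotvNl dotvC. Qed.

Lemma dotvBB u v : dotv (u - v) (u - v) = dotv u u - 2 * dotv u v + dotv v v.
Proof. rewrite dotvDl !dotvDr !dotvNl !dotvNr (dotvC v u); ring. Qed.

Lemma dotvDD u v : dotv (u + v) (u + v) = dotv u u + 2 * dotv u v + dotv v v.
Proof. rewrite dotvDl !dotvDr (dotvC v u); ring. Qed.

Lemma dotv_ge0 v : 0 <= dotv v v.
Proof. by apply: sumr_ge0 => i _; rewrite -expr2 sqr_ge0. Qed.

Lemma CS u v : dotv u v ^+ 2 <= dotv u u * dotv v v.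
Proof.
have [vv0|vvpos] := eqVneq (dotv v v) 0.
  have e : dotv u v = 0.
    rewrite /dotv big1 // => i _.
    have /eqP := (@psumr_eq0P _ _ predT (fun i => v ord0 i * v ord0 i)
       (fun i _ => (ltac:(by rewrite -expr2 sqr_ge0) : 0 <= v ord0 i * v ord0 i)) vv0 i isT).
    by rewrite mulf_eq0 orbb => /eqP ->; rewrite mulr0.
  by rewrite e vv0 expr0n /= mulr0.
have vp : 0 < dotv v v by rewrite lt_def vvpos dotv_ge0.
set t := dotv u v / dotv v v.
have h := dotv_ge0 (u - t *: v).
rewrite dotvBB dotvZr dotvZl dotvZr in h.
have e : dotv v v * (dotv u u - 2 * (t * dotv u v) + t * (t * dotv v v))
   = dotv u u * dotv v v - dotv u v ^+ 2.
  rewrite /t; field; exact: vvpos.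
have := mulr_ge0 (ltW vp) h; rewrite e subr_ge0 => //.
Qed.


Lemma sq_le (x y : R) : 0 <= y -> x ^+ 2 <= y ^+ 2 -> x <= y.
Proof. move=> y0 h; nra. Qed.

Lemma enorm_ge0 v : 0 <= enorm v.
Proof. exact: sqrtr_ge0. Qed.

Lemma enorm2 v : enorm v ^+ 2 = dotv v v.
Proof. by rewrite sqr_sqrtr // dotv_ge0. Qed.

Lemma enormZ k v : enorm (k *: v) = `|k| * enorm v.
Proof.
by rewrite /enorm dotvZl dotvZr mulrA -expr2 sqrtrM ?sqr_ge0 // sqrtr_sqr.
Qed.

Lemma enormB u v : enorm (u - v) = enorm (v - u).
Proof. by rewrite -opprB -scaleN1r enormZ normrN normr1 mul1r. Qed.

Lemma enormN v : enorm (- v) = enorm v.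
Proof. by rewrite -scaleN1r enormZ normrN normr1 mul1r. Qed.

Lemma dotv_le u v : dotv u v <= enorm u * enorm v.
Proof.
apply: sq_le; first by rewrite mulr_ge0 ?enorm_ge0.
by rewrite exprMn !enorm2 CS.
Qed.

Lemma dotv_abs u v : `|dotv u v| <= enorm u * enorm v.
Proof.
rewrite ler_norml dotv_le andbT.
have := dotv_le (- u) v; rewrite dotvNl enormN.
by rewrite lerNl.
Qed.

Lemma enormD u v : enorm (u + v) <= enorm u + enorm v.
Proof.
apply: sq_le; first by rewrite addr_ge0 ?enorm_ge0.
rewrite enorm2 dotvDD sqrrD !enorm2 -mulr_natl.
have := dotv_le u v; lra.
Qed.

Lemma enorm_le v (r : R) : 0 <= r -> (enorm v <= r) = (dotv v v <= r ^+ 2).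
Proof.
move=> r0; apply/idP/idP => h.
  by rewrite -enorm2 lerXn2r // ?nnegrE ?enorm_ge0.
by apply: sq_le => //; rewrite enorm2.
Qed.

Lemma XR_convex (X : set V) r x y l : convex_seg X ->
  XR X r x -> XR X r y -> 0 <= l <= 1 -> XR X r ((1 - l) *: x + l *: y).
Proof.
move=> cX [s1 [Xs1 h1]] [s2 [Xs2 h2]] /andP[l0 l1].
exists ((1 - l) *: s1 + l *: s2); split; first by apply: cX => //; rewrite l0 l1.
have -> : (1 - l) *: x + l *: y - ((1 - l) *: s1 + l *: s2)
   = (1 - l) *: (x - s1) + l *: (y - s2).
  by rewrite !scalerBr opprD !addrA; congr (_ - _); rewrite addrAC -!addrA; congr (_ + _); rewrite addrC.
apply: le_trans (enormD _ _) _.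
rewrite !enormZ !ger0_norm ?subr_ge0 //.
have -> : r = (1 - l) * r + l * r by ring.
by apply: lerD; apply: ler_wpM2l => //; rewrite subr_ge0.
Qed.

End Vec.

Local Open Scope classical_set_scope.

Theorem lemma3 (R : realType) (N : nat) (f : 'rV[R]_N -> R) (X : set 'rV[R]_N)
  (D0 eps Reps : R) (xstar xk : 'rV[R]_N) :
  {within XR X Reps, continuous f} ->
  compact X -> convex_seg X -> is_diameter X D0 ->
  0 < eps -> 0 < Reps ->
  X xstar -> (forall x, X x -> f xstar <= f x) ->
  standing_assumption f X (f xstar) eps Reps ->
  XR X Reps xk -> ~ Xstar f X (f xstar) eps Reps xk ->
  let alpha := asin (Num.sqrt 3 * Reps / (2 * enorm (xstar - xk))) in
  [/\ Reps < enorm (xstar - xk),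
      (* part 1 *)
      Num.sqrt 3 * Reps / (2 * (D0 + Reps)) <= sin alpha < Num.sqrt 3 / 2
      /\ asin (Num.sqrt 3 * Reps / (2 * (D0 + Reps))) <= alpha < pi / 3,
      (* part 2 *)
      (forall d, enorm d = 1 -> vangle (xstar - xk) d <= alpha ->
         exists a b : R, [/\ 0 <= a, a + Reps <= b &
           forall t, (0 <= t /\ cball xstar Reps (xk + t *: d)) <-> a <= t <= b])
    & (* part 3 *)
      (forall d, enorm d = 1 -> vangle (xstar - xk) d <= alpha ->
         exists y, dir_search_finds f X eps Reps xk d y)].
Proof.
move=> _ _ cvx [diam _] eps0 R0 Xs _ SA XRk nXs alpha.
have dot00 : dotv (0 : 'rV[R]_N) 0 = 0.
  by rewrite /dotv big1 // => i _; rewrite mxE mul0r.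
have en0 : enorm (0 : 'rV[R]_N) = 0 by rewrite /enorm dot00 sqrtr0.
have XRs : XR X Reps xstar by exists xstar; rewrite subrr en0; split => //; exact: ltW.
have fk : f xstar + 2 * eps / 3 < f xk.
  by rewrite ltNge; apply/negP => h; apply: nXs; split.
have fball : forall y, cball xstar Reps y -> f y <= f xstar + eps / 3.
  move=> y hy; apply: SA => //; first lra.
  by exists xstar.
set L := enorm (xstar - xk).
have LR : Reps < L.
  rewrite ltNge; apply/negP => h.
  have := fball xk; rewrite /cball /= enormB => /(_ h); lra.
have L0 : 0 < L by lra.
have D00 : 0 <= D0 by have := diam _ _ Xs Xs; rewrite subrr en0.
have LD : L <= D0 + Reps.
  case: XRk => s0 [Xs0 hs0]; rewrite /L.
  have -> : xstar - xk = (xstar - s0) + (s0 - xk) by rewrite addrA subrK.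
  apply: le_trans (@enormD R N _ _) _; apply: lerD; first exact: diam.
  by rewrite enormB.
have s3p : 0 < Num.sqrt 3 :> R by rewrite sqrtr_gt0.
set s := Num.sqrt 3 * Reps / (2 * L).
have s0 : 0 <= s by rewrite /s divr_ge0 // ?mulr_ge0 //; lra.
have ss3 : s < Num.sqrt 3 / 2.
  rewrite -subr_gt0.
  have -> : Num.sqrt 3 / 2 - s = Num.sqrt 3 * (L - Reps) / (2 * L).
    rewrite /s; field; lra.
  by rewrite divr_gt0 // ?mulr_gt0 //; lra.
have s1 : s <= 1 by have := sqrt3_lt2 R; lra.
have sL : (s * L) ^+ 2 = 3 / 4 * Reps ^+ 2.
  have -> : s * L = Num.sqrt 3 * Reps / 2 by rewrite /s; field; lra.
  by rewrite !exprMn sqrt3; field.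
set sA := Num.sqrt 3 * Reps / (2 * (D0 + Reps)).
have sA0 : 0 <= sA by rewrite /sA divr_ge0 // ?mulr_ge0 //; lra.
have sAs : sA <= s.
  rewrite -subr_ge0.
  have -> : s - sA = Num.sqrt 3 * Reps * (D0 + Reps - L) / (2 * L * (D0 + Reps)).
    rewrite /s /sA; field; apply/andP; split; lra.
  by rewrite divr_ge0 // ?mulr_ge0 //; lra.
have alE : alpha = asin s by [].
have sin_al : sin alpha = s by rewrite alE asinK // in_itv /=; apply/andP; split; lra.
have al0 : 0 <= alpha by rewrite alE; apply: asin_ge0; apply/andP; split.
have al1 : alpha <= pi / 2 by rewrite alE; apply: asin_lepi2; apply/andP; split; lra.
have chord : forall d, enorm d = 1 -> vangle (xstar - xk) d <= alpha ->
    exists a b : R, [/\ 0 < a, a + Reps <= b &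
      forall t, (0 <= t /\ cball xstar Reps (xk + t *: d)) <-> a <= t <= b].
  move=> d hd hv.
  set u := xstar - xk in hv *.
  set c := dotv u d.
  rewrite /vangle hd mulr1 -/L -/c in hv.
  have cL : `|c| <= L by have := @dotv_abs R N u d; rewrite hd mulr1.
  have cLi : -1 <= c / L <= 1.
    move: cL; rewrite ler_norml => /andP[h1 h2].
    by rewrite ler_pdivlMr // ler_pdivrMr //; apply/andP; split; lra.
  have al01 : 0 <= alpha <= pi / 2 by rewrite al0 al1.
  have hc := @cos_le_of_acos R (c / L) alpha cLi al01 hv.
  rewrite alE cos_asin in hc; last by apply/andP; split; lra.
  rewrite -/s ler_pdivlMr // in hc.
  set q := Num.sqrt (1 - s ^+ 2) in hc.
  have q0 : 0 <= q := sqrtr_ge0 _.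
  have q2 : q ^+ 2 = 1 - s ^+ 2 by rewrite sqr_sqrtr //; nra.
  have sq : s ^+ 2 < 3 / 4 by have := sqrt3 R; nra.
  have qh : 1 / 2 < q by nra.
  have c0 : 0 < c by nra.
  have c2 : L ^+ 2 - 3 / 4 * Reps ^+ 2 <= c ^+ 2.
    have qL0 : 0 <= q * L by rewrite mulr_ge0 //; lra.
    have h1 : (q * L) ^+ 2 <= c ^+ 2 by rewrite lerXn2r // ?nnegrE //; lra.
    have -> : L ^+ 2 - 3 / 4 * Reps ^+ 2 = (q * L) ^+ 2.
      by rewrite exprMn q2 mulrBl mul1r -exprMn sL.
    exact: h1.
  set D := c ^+ 2 - L ^+ 2 + Reps ^+ 2.
  have D0' : 0 <= D by rewrite /D; nra.
  set r := Num.sqrt D.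
  have r0 : 0 <= r := sqrtr_ge0 _.
  have r2 : r ^+ 2 = D by rewrite sqr_sqrtr.
  have uu : dotv u u = L ^+ 2 by rewrite enorm2.
  have dd : dotv d d = 1 by rewrite -enorm2 hd expr1n.
  exists (c - r), (c + r); split.
  - have Dlt : D < c ^+ 2 by rewrite /D; nra.
    rewrite subr_gt0; nra.
  - have DR : Reps ^+ 2 / 4 <= D by rewrite /D; nra.
    nra.
  - move=> t.
    have -> : cball xstar Reps (xk + t *: d) <-> (t ^+ 2 - 2 * t * c + L ^+ 2 <= Reps ^+ 2).
      rewrite /cball /= enorm_le; last exact: ltW.
      have -> : xk + t *: d - xstar = t *: d - u by rewrite /u opprB [xk + _]addrC -addrA.
      rewrite dotvBB !dotvZl !dotvZr dd uu (@dotvC R N d u) -/c.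
      by split => hh; nra.
    split.
    + move=> [t0 h].
      have h3 : (t - c) ^+ 2 <= r ^+ 2 by rewrite r2 /D; nra.
      apply/andP; split; nra.
    + move=> /andP[h1 h2].
      have h3 : (t - c) ^+ 2 <= r ^+ 2 by nra.
      rewrite r2 /D in h3.
      split; nra.
split => //.
- split; first by rewrite sin_al sAs ss3.
  have h1 : asin sA <= alpha by rewrite alE; apply: asin_le => //; lra.
  have h2 : alpha < pi / 3 by rewrite alE; apply: asin_lt_pi3.
  by rewrite h1 h2.
- move=> d hd hv; have [a [b [a0 ab h]]] := chord d hd hv.
  by exists a, b; split => //; exact: ltW.
move=> d hd hv; have [a [b [a0 ab h]]] := chord d hd hv.
have aR : 0 <= a / Reps by rewrite divr_ge0 //; lra.
have := truncn_itv aR; set n := Num.truncn (a / Reps) => /andP[hn1 hn2].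
set j0 := n.+1.
have j0a : a <= j0%:R * Reps /\ j0%:R * Reps <= b.
  rewrite /j0 mulrS.
  rewrite ler_pdivlMr // in hn1. rewrite ltr_pdivrMr // in hn2.
  rewrite mulrS in hn2.
  split; nra.
set y0 := xk + (j0%:R * Reps) *: d.
have cb0 : cball xstar Reps y0.
  have hj : a <= j0%:R * Reps <= b by case: j0a => -> ->.
  by have [_ hc] := (h _).2 hj.
have Py0 : f y0 <= f xk - eps / 3 by have := fball _ cb0; lra.
set P := fun j : nat => (0 < j)%N && (f (xk + (j%:R * Reps) *: d) <= f xk - eps / 3).
have exP : exists j, P j by exists j0; rewrite /P Py0.
have XRy0 : XR X Reps y0 by exists xstar; split.
have XRi : forall i : nat, (i <= j0)%N -> XR X Reps (xk + (i%:R * Reps) *: d).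
  move=> i hi.
  have j0p : (0 : R) < j0%:R by rewrite ltr0n.
  pose l : R := i%:R / j0%:R.
  have -> : xk + (i%:R * Reps) *: d = (1 - l) *: xk + l *: y0.
    rewrite /y0 scalerDr scalerA addrA -scalerDl subrK scale1r.
    by congr (_ + _ *: _); rewrite /l; field; lra.
  apply: (@XR_convex R N X Reps xk y0 l cvx XRk XRy0).
  apply/andP; split; first by rewrite /l divr_ge0 // ler0n.
  by rewrite /l ler_pdivrMr // mul1r ler_nat.
case: (ex_minnP exP) => j /andP[jpos Pj] jmin.
have jj0 : (j <= j0)%N by apply: jmin; rewrite /P Py0.
exists (xk + (j%:R * Reps) *: d), j; split => //.
- exact: XRi.
- move=> i /andP[i0 ij]; split.
    by apply: XRi; apply: leq_trans jj0; apply: ltnW.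
  rewrite ltNge; apply/negP => hP.
  have := jmin i; rewrite /P i0 hP => /(_ isT); rewrite leqNgt ij.
  done.
Qed.
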